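(* (Work in $\mathsf{ZFC}$.) Let $\mathcal S$ be a countable vocabulary of function symbols and predicate symbols of finite arity, containing the binary predicate symbols $=,\neq,\in,\notin$. Let $T$ be a set of $\Sigma(L_{\omega\omega}(\mathcal S))$ conditionals and let $\chi\Rightarrow\chi'$ be a $\Sigma(L_{\omega\omega}(\mathcal S))$ conditional. Then either $\chi\Rightarrow\chi'$ has a finitary positivistic proof from the axioms of $T$ together with the logical axioms (L1)–(L23) listed below, or there is an admissible structure $M$ that models every conditional of $T$ but in which, for some assignment of elements to the free variables, $\chi$ holds and $\chi'$ fails. Logical axioms (here free and bound variables are kept distinct: $x,y$ denote bound variables, $a$ a free variable, $r,s,t$ terms, $\phi,\psi,\chi$ arbitrary $\Sigma$ formulas, and $\phi^x_t$ denotes substitution of $t$ for $x$): (L1) $\phi\Rightarrow\top$; (L2) $\bot\Rightarrow\psi$; (L3) $\phi\wedge\psi\Rightarrow\phi$; (L4) $\phi\wedge\psi\Rightarrow\psi$; (L5) $\phi\Rightarrow\phi\wedge\phi$; (L6) $\phi\Rightarrow\phi\vee\psi$; (L7) $\psi\Rightarrow\phi\vee\psi$; (L8) $\psi\vee\psi\Rightarrow\psi$; (L9) $(\phi\vee\psi)\wedge\chi\Rightarrow(\phi\wedge\chi)\vee(\psi\wedge\chi)$; (L10) $\phi^x_t\Rightarrow\exists x\,\phi$; (L11) $\exists y\,\psi\Rightarrow\psi$; (L12) $\chi\wedge\exists y\,\phi\Rightarrow\exists y\,(\chi\wedge\phi)$; (L13) $t\in s\wedge\forall x\in s\,\phi\Rightarrow\phi^x_t$;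 (L14) $\psi\Rightarrow\forall y\in s\,(\psi\wedge y\in s)$; (L15) $\forall y\in s\,(\chi\vee\phi)\Rightarrow\chi\vee\forall y\in s\,\phi$; (L16) $\top\Rightarrow s\in t\vee s\notin t$; (L17) $s\in t\wedge s\notin t\Rightarrow\bot$; (L18) $\top\Rightarrow s=t\vee s\neq t$; (L19) $s=t\wedge s\neq t\Rightarrow\bot$; (L20) $\top\Rightarrow t=t$; (L21) $s=t\Rightarrow t=s$; (L22) $r=s\wedge s=t\Rightarrow r=t$; (L23) $s=t\wedge\phi^a_s\Rightarrow\phi^a_t$.
   Context: $\Sigma(L_{\omega\omega}(\mathcal S))$ formulas: built from atomic formulas of $\mathcal S$ (including the logical constants $\top,\bot$; the symbols $\neq,\notin$ are primitive predicate symbols, not abbreviations) using binary conjunction $\wedge$, binary disjunction $\vee$, bounded universal quantification $\forall x\in t\,\phi$ ($t$ a term), and unbounded existential quantification $\exists x\,\phi$; there is no negation and no implication. A conditional is an expression $\phi\Rightarrow\psi$ with $\phi,\psi$ $\Sigma$ formulas. An application of a conditional $\phi(v_1,\dots,v_n)\Rightarrow\psi(v_1,\dots,v_n)$ (where $v_1,\dots,v_n$ include its free variables) is a pair $(\chi_0,\chi_1)$ of $\Sigma$ formulas such that $\chi_1$ is obtained from $\chi_0$ by replacing one occurrence of a subformula of the form $\phi(t_1,\dots,t_n)$ by $\psi(t_1,\dots,t_n)$, where the terms $t_i$ may contain variables bound in $\chi_0$ (''deep inference''). A finitary positivistic proof of $\chi\Rightarrow\chi'$ from a set of conditionals (axioms)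 is a finite sequence $\chi_0=\chi,\chi_1,\dots,\chi_n=\chi'$ of $\Sigma$ formulas such that each $(\chi_i,\chi_{i+1})$ is an application of some axiom. An admissible structure for $\mathcal S$ is a structure in which $=$ is genuine equality, $\neq$ is interpreted as the complement of $=$, and $\notin$ as the complement of the interpretation of $\in$. A structure models a conditional $\phi\Rightarrow\psi$ if it satisfies the universal closure of $\phi\to\psi$. *)

(* Defs.v *)
From Stdlib Require Import List Arith PeanoNat.
Import ListNotations.

Record vocab := Vocab {
  fsym : Type;
  psym : Type;
  far : fsym -> nat;
  par : psym -> nat;
  sEq : psym;
  sNeq : psym;
  sIn : psym;
  sNin : psym
}.

Section Syntax.
Variable V : vocab.

(* Terms: free variables (parameters) are named by nat, bound variables are
   de Bruijn indices (so free and bound variables are kept distinct). *)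
Inductive term : Type :=
| fvar : nat -> term
| bvar : nat -> term
| tapp : fsym V -> list term -> term.

(* Sigma formulas: atoms, top, bot, /\, \/, bounded forall x in t, exists x.
   In [fall t phi] and [fex phi] the body [phi] binds de Bruijn index 0. *)
Inductive formula : Type :=
| fatom : psym V -> list term -> formula
| ftop : formula
| fbot : formula
| fand : formula -> formula -> formula
| f_or : formula -> formula -> formula
| fall : term -> formula -> formula
| fex : formula -> formula.

Definition cond : Type := (formula * formula)%type.

Definition eqf (s t : term) := fatom (sEq V) [s; t].
Definition neqf (s t : term) := fatom (sNeq V) [s; t].
Definition inf (s t : term) := fatom (sIn V) [s; t].
Definition ninf (s t : term) := fatom (sNin V) [s; t].

Fixpoint wf_term (k : nat) (t : term) : Prop :=
  match t with
  | fvar _ => True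
  | bvar n => n < k
  | tapp f ts => length ts = far V f /\
      (fix wfl (l : list term) : Prop :=
         match l with [] => True | u :: l' => wf_term k u /\ wfl l' end) ts
  end.

Fixpoint wf_form (k : nat) (phi : formula) : Prop :=
  match phi with
  | fatom p ts => length ts = par V p /\ Forall (wf_term k) ts
  | ftop | fbot => True
  | fand a b | f_or a b => wf_form k a /\ wf_form k b
  | fall t a => wf_term k t /\ wf_form (S k) a
  | fex a => wf_form (S k) a
  end.

Definition sigma_formula (phi : formula) : Prop := wf_form 0 phi.

Fixpoint tlift (k : nat) (t : term) : term :=
  match t with
  | fvar v => fvar v
  | bvar n => if n <? k then bvar n else bvar (S n)
  | tapp f ts => tapp f (map (tlift k) ts)
  end.

Fixpoint flift (k : nat) (phi : formula) : formula :=
  match phi with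
  | fatom p ts => fatom p (map (tlift k) ts)
  | ftop => ftop
  | fbot => fbot
  | fand a b => fand (flift k a) (flift k b)
  | f_or a b => f_or (flift k a) (flift k b)
  | fall t a => fall (tlift k t) (flift (S k) a)
  | fex a => fex (flift (S k) a)
  end.

Fixpoint tinst (k : nat) (u : term) (t : term) : term :=
  match t with
  | fvar v => fvar v
  | bvar n => if n <? k then bvar n else if n =? k then u else bvar (pred n)
  | tapp f ts => tapp f (map (tinst k u) ts)
  end.

Fixpoint finst (k : nat) (u : term) (phi : formula) : formula :=
  match phi with
  | fatom p ts => fatom p (map (tinst k u) ts)
  | ftop => ftop
  | fbot => fbot
  | fand a b => fand (finst k u a) (finst k u b)
  | f_or a b => f_or (finst k u a) (finst k u b)
  | fall t a => fall (tinst k u t) (finst (S k) (tlift 0 u) a)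
  | fex a => fex (finst (S k) (tlift 0 u) a)
  end.

(* phi^x_t where phi is the body of a binder on x *)
Definition open (phi : formula) (t : term) : formula := finst 0 t phi.

Fixpoint tpsubst (sg : nat -> term) (t : term) : term :=
  match t with
  | fvar v => sg v
  | bvar n => bvar n
  | tapp f ts => tapp f (map (tpsubst sg) ts)
  end.

Fixpoint fpsubst (sg : nat -> term) (phi : formula) : formula :=
  match phi with
  | fatom p ts => fatom p (map (tpsubst sg) ts)
  | ftop => ftop
  | fbot => fbot
  | fand a b => fand (fpsubst sg a) (fpsubst sg b)
  | f_or a b => f_or (fpsubst sg a) (fpsubst sg b)
  | fall t a => fall (tpsubst sg t) (fpsubst (fun v => tlift 0 (sg v)) a)
  | fex a => fex (fpsubst (fun v => tlift 0 (sg v)) a)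
  end.

Definition fsubst1 (a : nat) (s : term) (phi : formula) : formula :=
  fpsubst (fun v => if v =? a then s else fvar v) phi.

(* Formulas and terms may contain
   bound variables of an enclosing context (dangling de Bruijn indices);
   side conditions "y not free in psi" are expressed by lifting. *)
Inductive logax : formula -> formula -> Prop :=
| L1 phi : logax phi ftop
| L2 psi : logax fbot psi
| L3 phi psi : logax (fand phi psi) phi
| L4 phi psi : logax (fand phi psi) psi
| L5 phi : logax phi (fand phi phi)
| L6 phi psi : logax phi (f_or phi psi)
| L7 phi psi : logax psi (f_or phi psi)
| L8 psi : logax (f_or psi psi) psi
| L9 phi psi chi :
    logax (fand (f_or phi psi) chi) (f_or (fand phi chi) (fand psi chi))
| L10 phi t : logax (open phi t) (fex phi)
| L11 psi : logax (fex (flift 0 psi)) psi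
| L12 chi phi : logax (fand chi (fex phi)) (fex (fand (flift 0 chi) phi))
| L13 t s phi : logax (fand (inf t s) (fall s phi)) (open phi t)
| L14 psi s : logax psi (fall s (fand (flift 0 psi) (inf (bvar 0) (tlift 0 s))))
| L15 s chi phi : logax (fall s (f_or (flift 0 chi) phi)) (f_or chi (fall s phi))
| L16 s t : logax ftop (f_or (inf s t) (ninf s t))
| L17 s t : logax (fand (inf s t) (ninf s t)) fbot
| L18 s t : logax ftop (f_or (eqf s t) (neqf s t))
| L19 s t : logax (fand (eqf s t) (neqf s t)) fbot
| L20 t : logax ftop (eqf t t)
| L21 s t : logax (eqf s t) (eqf t s)
| L22 r s t : logax (fand (eqf r s) (eqf s t)) (eqf r t)
| L23 s t a phi : logax (fand (eqf s t) (fsubst1 a s phi)) (fsubst1 a t phi).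

(* Applications of the axioms of T: substitution instances (terms may
   contain variables bound in the ambient formula). *)
Definition axinst (T : cond -> Prop) (a b : formula) : Prop :=
  logax a b \/
  exists c sg, T c /\ a = fpsubst sg (fst c) /\ b = fpsubst sg (snd c).

Inductive ctx : Type :=
| hole : ctx
| cand_l : ctx -> formula -> ctx
| cand_r : formula -> ctx -> ctx
| cor_l : ctx -> formula -> ctx
| cor_r : formula -> ctx -> ctx
| call : term -> ctx -> ctx
| cex : ctx -> ctx.

Fixpoint plug (C : ctx) (phi : formula) : formula :=
  match C with
  | hole => phi
  | cand_l C' b => fand (plug C' phi) b
  | cand_r a C' => fand a (plug C' phi)
  | cor_l C' b => f_or (plug C' phi) b
  | cor_r a C' => f_or a (plug C' phi)
  | call t C' => fall t (plug C' phi)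
  | cex C' => fex (plug C' phi)
  end.

(* (chi0, chi1) is an application of some axiom (deep inference) *)
Definition step (T : cond -> Prop) (chi0 chi1 : formula) : Prop :=
  exists C a b, axinst T a b /\ chi0 = plug C a /\ chi1 = plug C b.

Inductive proves (T : cond -> Prop) : formula -> formula -> Prop :=
| pr_refl chi : sigma_formula chi -> proves T chi chi
| pr_step chi0 chi1 chi' :
    sigma_formula chi0 -> step T chi0 chi1 -> proves T chi1 chi' -> proves T chi0 chi'.

Record structure := Structure {
  dom : Type;
  funI : fsym V -> list dom -> dom;
  predI : psym V -> list dom -> Prop
}.

Definition admissible (M : structure) : Prop :=
  (forall a b : dom M, predI M (sEq V) [a; b] <-> a = b) /\
  (forall a b : dom M, predI M (sNeq V) [a; b] <-> a <> b) /\
  (forall a b : dom M, predI M (sNin V) [a; b] <-> ~ predI M (sIn V) [a; b]).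

Definition scons {D : Type} (d : D) (be : nat -> D) : nat -> D :=
  fun n => match n with 0 => d | S m => be m end.

Fixpoint teval (M : structure) (rho be : nat -> dom M) (t : term) : dom M :=
  match t with
  | fvar v => rho v
  | bvar n => be n
  | tapp f ts => funI M f (map (teval M rho be) ts)
  end.

Fixpoint sat (M : structure) (rho be : nat -> dom M) (phi : formula) : Prop :=
  match phi with
  | fatom p ts => predI M p (map (teval M rho be) ts)
  | ftop => True
  | fbot => False
  | fand a b => sat M rho be a /\ sat M rho be b
  | f_or a b => sat M rho be a \/ sat M rho be b
  | fall t a => forall d : dom M, predI M (sIn V) [d; teval M rho be t] ->
                  sat M rho (scons d be) a
  | fex a => exists d : dom M, sat M rho (scons d be) a
  end.

Definition models (M : structure) (c : cond) : Prop :=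
  forall rho be : nat -> dom M, sat M rho be (fst c) -> sat M rho be (snd c).

End Syntax.

Arguments fvar {V}. Arguments bvar {V}.

(* Main.v *)
Require Import Defs.
From Stdlib Require Import List Arith PeanoNat Lia Cantor ClassicalEpsilon Classical ProofIrrelevance FunctionalExtensionality PropExtensionality.
Import ListNotations.

Arguments tapp {V}. Arguments fatom {V}. Arguments ftop {V}. Arguments fbot {V}.
Arguments fand {V}. Arguments f_or {V}. Arguments fall {V}. Arguments fex {V}.
Arguments eqf {V}. Arguments neqf {V}. Arguments inf {V}. Arguments ninf {V}.
Arguments wf_term {V}. Arguments wf_form {V}. Arguments sigma_formula {V}.
Arguments tlift {V}. Arguments flift {V}. Arguments tinst {V}. Arguments finst {V}.
Arguments open {V}. Arguments tpsubst {V}. Arguments fpsubst {V}. Arguments fsubst1 {V}.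
Arguments logax {V}. Arguments axinst {V}. Arguments step {V}. Arguments proves {V}.
Arguments hole {V}. Arguments cand_l {V}. Arguments cand_r {V}. Arguments cor_l {V}.
Arguments cor_r {V}. Arguments call {V}. Arguments cex {V}. Arguments plug {V}.
Arguments teval {V}. Arguments sat {V}. Arguments models {V}. Arguments admissible {V}.
Arguments funI {V}. Arguments predI {V}. Arguments dom {V}.
Arguments L1 {V}. Arguments L2 {V}. Arguments L3 {V}. Arguments L4 {V}. Arguments L5 {V}.
Arguments L6 {V}. Arguments L7 {V}. Arguments L8 {V}. Arguments L9 {V}. Arguments L10 {V}.
Arguments L11 {V}. Arguments L12 {V}. Arguments L13 {V}. Arguments L14 {V}. Arguments L15 {V}.
Arguments L16 {V}. Arguments L17 {V}. Arguments L18 {V}. Arguments L19 {V}. Arguments L20 {V}.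
Arguments L21 {V}. Arguments L22 {V}. Arguments L23 {V}.
Arguments pr_refl {V}. Arguments pr_step {V}.

Definition term_ind' (V : vocab) (P : term V -> Prop)
  (Hf : forall v, P (fvar v)) (Hb : forall n, P (bvar n))
  (Ha : forall f ts, Forall P ts -> P (tapp f ts)) : forall t, P t :=
  fix F t := match t with
  | fvar v => Hf v | bvar n => Hb n
  | tapp f ts => Ha f ts ((fix G l := match l return Forall P l with
       | [] => Forall_nil _ | x :: l' => Forall_cons _ (F x) (G l') end) ts)
  end.


Lemma map_ext_Forall' {A B} (f g : A -> B) l : Forall (fun x => f x = g x) l -> map f l = map g l.
Proof. induction 1; simpl; f_equal; auto. Qed.

Lemma map_id_Forall {A} (f : A -> A) l : Forall (fun x => f x = x) l -> map f l = l.
Proof. induction 1; simpl; f_equal; auto. Qed.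

Lemma wf_term_app V k f (ts : list (term V)) :
  wf_term k (tapp f ts) <-> length ts = far V f /\ Forall (wf_term k) ts.
Proof.
  simpl. split; intros [H1 H2]; split; auto; clear H1; induction ts; simpl in *.
  - constructor.
  - destruct H2; constructor; auto.
  - auto.
  - inversion H2; subst; split; [assumption| apply IHts; assumption].
Qed.

Notation lift sg := (fun v => tlift 0 (sg v)).

Ltac nat_cases := repeat match goal with
  | |- context [?a <? ?b] => destruct (Nat.ltb_spec a b)
  | |- context [?a =? ?b] => destruct (Nat.eqb_spec a b)
  end.

Lemma tlift_tlift V (x : term V) : forall j k, j <= k ->
  tlift j (tlift k x) = tlift (S k) (tlift j x).
Proof.
  induction x using term_ind'; intros j k Hjk; simpl.
  - reflexivity.
  - nat_cases; simpl; nat_cases; simpl; try reflexivity; try lia; nat_cases; try lia; reflexivity.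
  - f_equal. rewrite !map_map. apply map_ext_Forall'.
    eapply Forall_impl; [|exact H]. intros a Ha. simpl. auto.
Qed.

Lemma tpsubst_ext V (x : term V) : forall sg sg', (forall v, sg v = sg' v) ->
  tpsubst sg x = tpsubst sg' x.
Proof.
  induction x using term_ind'; intros sg sg' E; simpl; auto.
  f_equal. apply map_ext_Forall'. eapply Forall_impl; [|exact H]. intros a Ha. auto.
Qed.

Lemma fpsubst_ext V (phi : formula V) : forall sg sg', (forall v, sg v = sg' v) ->
  fpsubst sg phi = fpsubst sg' phi.
Proof.
  induction phi; intros sg sg' E; simpl; f_equal; auto.
  - apply map_ext. intros; apply tpsubst_ext; auto.
  - apply tpsubst_ext; auto.
  - apply IHphi. intros; rewrite E; auto.
  - apply IHphi. intros; rewrite E; auto.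
Qed.

Lemma tpsubst_tlift V (x : term V) : forall k sg,
  tpsubst (fun v => tlift k (sg v)) (tlift k x) = tlift k (tpsubst sg x).
Proof.
  induction x using term_ind'; intros k sg; simpl; auto.
  - nat_cases; reflexivity.
  - f_equal. rewrite !map_map. apply map_ext_Forall'. eapply Forall_impl; [|exact H].
    intros a Ha. simpl. auto.
Qed.

Lemma fpsubst_flift V (phi : formula V) : forall k sg,
  fpsubst (fun v => tlift k (sg v)) (flift k phi) = flift k (fpsubst sg phi).
Proof.
  induction phi; intros k sg; simpl; f_equal; auto.
  - rewrite !map_map. apply map_ext. intros; apply tpsubst_tlift.
  - apply tpsubst_tlift.
  - rewrite <- IHphi. apply fpsubst_ext. intros v. apply tlift_tlift. lia.
  - rewrite <- IHphi. apply fpsubst_ext. intros v. apply tlift_tlift. lia.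
Qed.

Lemma tpsubst_lift0 V (x : term V) sg : tpsubst (lift sg) (tlift 0 x) = tlift 0 (tpsubst sg x).
Proof. apply tpsubst_tlift. Qed.

Lemma fpsubst_lift0 V (phi : formula V) sg :
  fpsubst (lift sg) (flift 0 phi) = flift 0 (fpsubst sg phi).
Proof. apply fpsubst_flift. Qed.

Lemma tpsubst_comp V (x : term V) : forall sg1 sg2,
  tpsubst sg2 (tpsubst sg1 x) = tpsubst (fun v => tpsubst sg2 (sg1 v)) x.
Proof.
  induction x using term_ind'; intros; simpl; auto.
  f_equal. rewrite map_map. apply map_ext_Forall'. eapply Forall_impl; [|exact H]. auto.
Qed.

Lemma fpsubst_comp V (phi : formula V) : forall sg1 sg2,
  fpsubst sg2 (fpsubst sg1 phi) = fpsubst (fun v => tpsubst sg2 (sg1 v)) phi.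
Proof.
  induction phi; intros; simpl; f_equal; auto.
  - rewrite map_map. apply map_ext. intros; apply tpsubst_comp.
  - apply tpsubst_comp.
  - rewrite IHphi. apply fpsubst_ext. intros v. apply tpsubst_lift0.
  - rewrite IHphi. apply fpsubst_ext. intros v. apply tpsubst_lift0.
Qed.

Fixpoint bge {V} (k : nat) (t : term V) : Prop :=
  match t with
  | fvar _ => True
  | bvar n => k <= n
  | tapp f ts => (fix g (l : list (term V)) : Prop :=
       match l with [] => True | u :: l' => bge k u /\ g l' end) ts
  end.

Lemma bge_app V k f (ts : list (term V)) : bge k (tapp f ts) <-> Forall (bge k) ts.
Proof.
  simpl. split; intros H; induction ts; simpl in *.
  - constructor.
  - destruct H; constructor; auto.
  - auto.
  - inversion H; subst; split; [assumption| apply IHts; assumption].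
Qed.

Lemma bge_lift V (x : term V) k : bge k x -> bge (S k) (tlift 0 x).
Proof.
  revert k; induction x using term_ind'; intros k Hb.
  - simpl; auto.
  - simpl in *; lia.
  - change (bge (S k) (tapp f (map (tlift 0) ts))).
    apply bge_app. apply bge_app in Hb. rewrite Forall_forall in *. intros y Hy.
    apply in_map_iff in Hy. destruct Hy as [z [<- Hz]]. auto.
Qed.

Lemma tinst_lift_bge V (x : term V) k w : bge k x -> tinst k w (tlift 0 x) = x.
Proof.
  revert k; induction x using term_ind'; intros k Hb.
  - reflexivity.
  - cbn -[Nat.ltb Nat.eqb] in *; nat_cases; try lia; cbn -[Nat.ltb Nat.eqb]; nat_cases; try lia. f_equal; lia.
  - simpl. f_equal. apply bge_app in Hb. rewrite map_map. apply map_id_Forall.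
    rewrite Forall_forall in *. auto.
Qed.

Lemma tpsubst_tinst V (t : term V) : forall k u sg, (forall v, bge k (sg v)) ->
  tpsubst sg (tinst k u t) = tinst k (tpsubst sg u) (tpsubst (lift sg) t).
Proof.
  induction t using term_ind'; intros k u sg Hb; simpl.
  - rewrite tinst_lift_bge; auto.
  - nat_cases; reflexivity.
  - f_equal. rewrite !map_map. apply map_ext_Forall'. eapply Forall_impl; [|exact H].
    intros a Ha; auto.
Qed.

Lemma fpsubst_finst V (phi : formula V) : forall k u sg, (forall v, bge k (sg v)) ->
  fpsubst sg (finst k u phi) = finst k (tpsubst sg u) (fpsubst (lift sg) phi).
Proof.
  induction phi; intros k u sg Hb; simpl; f_equal; auto.
  - rewrite !map_map. apply map_ext. intros; apply tpsubst_tinst; auto.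
  - apply tpsubst_tinst; auto.
  - rewrite IHphi. f_equal. apply tpsubst_lift0. intros v; apply bge_lift; auto.
  - rewrite IHphi. f_equal. apply tpsubst_lift0. intros v; apply bge_lift; auto.
Qed.

Lemma bge0 V (x : term V) : bge 0 x.
Proof.
  induction x using term_ind'. simpl; auto. simpl; lia. apply bge_app; auto.
Qed.

Lemma fpsubst_open V (phi : formula V) t sg :
  fpsubst sg (open phi t) = open (fpsubst (lift sg) phi) (tpsubst sg t).
Proof. unfold open. apply fpsubst_finst. intros; apply bge0. Qed.

Lemma wf_term_mono V (t : term V) : forall k k', k <= k' -> wf_term k t -> wf_term k' t.
Proof.
  induction t using term_ind'; intros k k' Hk Hw.
  - exact I.
  - simpl in *; lia.
  - apply wf_term_app in Hw. apply wf_term_app. destruct Hw as [Hl Hw]. split; auto.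
    rewrite Forall_forall in *. intros x Hx. eapply H; eauto.
Qed.

Lemma wf_form_mono V (phi : formula V) : forall k k', k <= k' -> wf_form k phi -> wf_form k' phi.
Proof.
  induction phi; intros k k' Hk Hw; simpl in *; auto.
  - destruct Hw as [Hl Hw]; split; auto. eapply Forall_impl; [|exact Hw].
    intros; eapply wf_term_mono; eauto.
  - destruct Hw; split; eauto.
  - destruct Hw; split; eauto.
  - destruct Hw; split. eapply wf_term_mono; eauto. eapply IHphi; [|eauto]; lia.
  - eapply IHphi; [|eauto]; lia.
Qed.

Lemma wf_tlift V (t : term V) : forall j k, wf_term k t -> wf_term (S k) (tlift j t).
Proof.
  induction t using term_ind'; intros j k Hw.
  - exact I.
  - simpl in *. nat_cases; simpl; lia.
  - apply wf_term_app in Hw. apply wf_term_app. destruct Hw as [Hl Hw].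
    rewrite length_map. split; auto.
    rewrite Forall_forall in *. intros x Hx. apply in_map_iff in Hx.
    destruct Hx as [y [<- Hy]]. eapply H; eauto.
Qed.

Lemma wf_tpsubst V (t : term V) : forall k sg, wf_term k t -> (forall v, wf_term k (sg v)) ->
  wf_term k (tpsubst sg t).
Proof.
  induction t using term_ind'; intros k sg Hw Hs; simpl; auto.
  apply wf_term_app in Hw. apply wf_term_app. destruct Hw as [Hl Hw].
  rewrite length_map. split; auto.
  rewrite Forall_forall in *. intros x Hx. apply in_map_iff in Hx.
  destruct Hx as [y [<- Hy]]. eapply H; eauto.
Qed.

Lemma wf_fpsubst V (phi : formula V) : forall k sg, wf_form k phi ->
  (forall v, wf_term k (sg v)) -> wf_form k (fpsubst sg phi).
Proof.
  induction phi; intros k sg Hw Hs; simpl in *; auto.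
  - destruct Hw as [Hl Hw]; rewrite length_map; split; auto.
    rewrite Forall_forall in *. intros x Hx. apply in_map_iff in Hx.
    destruct Hx as [y [<- Hy]]. apply wf_tpsubst; auto.
  - destruct Hw; split; eauto.
  - destruct Hw; split; eauto.
  - destruct Hw; split. apply wf_tpsubst; auto. apply IHphi; auto.
    intros; apply wf_tlift; auto.
  - apply IHphi; auto. intros; apply wf_tlift; auto.
Qed.

Lemma wf_tinst V (t : term V) : forall k m u, wf_term (S m) t -> k <= m -> wf_term m u ->
  wf_term m (tinst k u t).
Proof.
  induction t using term_ind'; intros k m u Hw Hk Hu.
  - exact I.
  - simpl in *. nat_cases; simpl; auto; lia.
  - apply wf_term_app in Hw. apply wf_term_app. destruct Hw as [Hl Hw].
    rewrite length_map. split; auto.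
    rewrite Forall_forall in *. intros x Hx. apply in_map_iff in Hx.
    destruct Hx as [y [<- Hy]]. eapply H; eauto.
Qed.

Lemma wf_finst V (phi : formula V) : forall k m u, wf_form (S m) phi -> k <= m -> wf_term m u ->
  wf_form m (finst k u phi).
Proof.
  induction phi; intros k m u Hw Hk Hu; simpl in *; auto.
  - destruct Hw as [Hl Hw]; rewrite length_map; split; auto.
    rewrite Forall_forall in *. intros x Hx. apply in_map_iff in Hx.
    destruct Hx as [y [<- Hy]]. apply wf_tinst; auto.
  - destruct Hw; split; eauto.
  - destruct Hw; split; eauto.
  - destruct Hw; split. apply wf_tinst; auto. apply IHphi; auto. lia. apply wf_tlift; auto.
  - apply IHphi; auto. lia. apply wf_tlift; auto.
Qed.

Lemma wf_open V (phi : formula V) u : wf_form 1 phi -> wf_term 0 u -> sigma_formula (open phi u).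
Proof. intros; apply wf_finst; auto. Qed.

Lemma tlift_wf_id V (t : term V) : forall k, wf_term k t -> tlift k t = t.
Proof.
  induction t using term_ind'; intros k Hw; auto.
  - simpl in *. nat_cases; auto; lia.
  - apply wf_term_app in Hw. destruct Hw as [_ Hw]. simpl. f_equal.
    apply map_id_Forall. rewrite Forall_forall in *. auto.
Qed.

Lemma flift_wf_id V (phi : formula V) : forall k, wf_form k phi -> flift k phi = phi.
Proof.
  induction phi; intros k Hw; simpl in *.
  - destruct Hw as [_ Hw]. f_equal. apply map_id_Forall. eapply Forall_impl; [|exact Hw].
    intros; apply tlift_wf_id; auto.
  - reflexivity.
  - reflexivity.
  - destruct Hw; f_equal; auto.
  - destruct Hw; f_equal; auto.
  - destruct Hw; f_equal; auto. apply tlift_wf_id; auto.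
  - f_equal; auto.
Qed.

Lemma tinst_bvar_id V (t : term V) : forall k, wf_term (S k) t -> tinst k (bvar k) t = t.
Proof.
  induction t using term_ind'; intros k Hw; auto.
  - simpl in *. nat_cases; subst; auto; lia.
  - apply wf_term_app in Hw. destruct Hw as [_ Hw]. simpl. f_equal.
    apply map_id_Forall. rewrite Forall_forall in *. auto.
Qed.

Lemma finst_bvar_id V (phi : formula V) : forall k, wf_form (S k) phi -> finst k (bvar k) phi = phi.
Proof.
  induction phi; intros k Hw; simpl in *.
  - destruct Hw as [_ Hw]. f_equal. apply map_id_Forall. eapply Forall_impl; [|exact Hw].
    intros; apply tinst_bvar_id; auto.
  - reflexivity.
  - reflexivity.
  - destruct Hw; f_equal; auto.
  - destruct Hw; f_equal; auto.
  - destruct Hw; f_equal. apply tinst_bvar_id; auto. simpl. nat_cases; try lia. apply IHphi; auto.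
  - f_equal. simpl. nat_cases; try lia. apply IHphi; auto.
Qed.

Fixpoint listmax (l : list nat) : nat := match l with [] => 0 | x :: l' => max x (listmax l') end.

Lemma listmax_ge l x : In x l -> x <= listmax l.
Proof. induction l; simpl; intros H; [contradiction|]. destruct H; subst; lia || (specialize (IHl H); lia). Qed.

Fixpoint tfvb {V} (t : term V) : nat :=
  match t with
  | fvar v => S v
  | bvar _ => 0
  | tapp f ts => (fix g (l : list (term V)) : nat :=
       match l with [] => 0 | u :: l' => max (tfvb u) (g l') end) ts
  end.

Lemma tfvb_app V f (ts : list (term V)) : tfvb (tapp f ts) = listmax (map tfvb ts).
Proof. simpl. induction ts; simpl; auto. Qed.

Fixpoint ffvb {V} (phi : formula V) : nat :=
  match phi with
  | fatom p ts => listmax (map tfvb ts)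
  | ftop | fbot => 0
  | fand a b | f_or a b => max (ffvb a) (ffvb b)
  | fall t a => max (tfvb t) (ffvb a)
  | fex a => ffvb a
  end.

Lemma tpsubst_agree V (t : term V) : forall sg sg', (forall v, v < tfvb t -> sg v = sg' v) ->
  tpsubst sg t = tpsubst sg' t.
Proof.
  induction t using term_ind'; intros sg sg' E.
  - simpl in *; auto.
  - reflexivity.
  - simpl tpsubst. f_equal. apply map_ext_Forall'. rewrite Forall_forall in *. intros x Hx.
  apply H; auto. intros v Hv. apply E. rewrite tfvb_app.
  assert (tfvb x <= listmax (map tfvb ts)) by (apply listmax_ge, in_map; auto). simpl in H0. lia.
Qed.

Lemma fpsubst_agree V (phi : formula V) : forall sg sg', (forall v, v < ffvb phi -> sg v = sg' v) ->
  fpsubst sg phi = fpsubst sg' phi.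
Proof.
  induction phi; intros sg sg' E; simpl in *; f_equal; auto.
  - apply map_ext_in. intros x Hx. apply tpsubst_agree. intros v Hv. apply E.
    assert (tfvb x <= listmax (map tfvb l)) by (apply listmax_ge, in_map; auto). lia.
  - apply IHphi1; intros; apply E; lia.
  - apply IHphi2; intros; apply E; lia.
  - apply IHphi1; intros; apply E; lia.
  - apply IHphi2; intros; apply E; lia.
  - apply tpsubst_agree; intros; apply E; lia.
  - apply IHphi; intros; rewrite E; auto; lia.
  - apply IHphi; intros; rewrite E; auto; lia.
Qed.

Lemma tpsubst_id V (t : term V) : tpsubst (fun v => fvar v) t = t.
Proof.
  induction t using term_ind'; simpl; auto. f_equal. apply map_id_Forall; auto.
Qed.

Lemma fpsubst_id V (phi : formula V) : fpsubst (fun v => fvar v) phi = phi.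
Proof.
  induction phi; simpl; f_equal; auto.
  - apply map_id_Forall. rewrite Forall_forall; intros; apply tpsubst_id.
  - apply tpsubst_id.
Qed.

Lemma tpsubst_fresh V (t : term V) sg : (forall v, v < tfvb t -> sg v = fvar v) -> tpsubst sg t = t.
Proof. intros H. rewrite <- (tpsubst_id V t) at 2. apply tpsubst_agree; auto. Qed.

Lemma fpsubst_fresh V (phi : formula V) sg : (forall v, v < ffvb phi -> sg v = fvar v) ->
  fpsubst sg phi = phi.
Proof. intros H. rewrite <- (fpsubst_id V phi) at 2. apply fpsubst_agree; auto. Qed.

Fixpoint bnd (f : nat -> nat) (n : nat) : nat := match n with 0 => 0 | S n => max (f n) (bnd f n) end.
Lemma bnd_ge f n v : v < n -> f v <= bnd f n.
Proof. induction n; simpl; intros; [lia|]. destruct (Nat.eq_dec v n); subst; [lia|].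
  specialize (IHn ltac:(lia)); lia. Qed.

Lemma L23_subst V (s t : term V) a phi sg :
  logax (fpsubst sg (fand (eqf s t) (fsubst1 a s phi))) (fpsubst sg (fsubst1 a t phi)).
Proof.
  set (N := ffvb phi). set (a' := bnd (fun v => tfvb (sg v)) N).
  set (phi' := fpsubst (fun v => if v =? a then fvar a' else sg v) phi).
  assert (Key : forall u, fpsubst sg (fsubst1 a u phi) = fsubst1 a' (tpsubst sg u) phi').
  { intros u. unfold fsubst1, phi'. rewrite !fpsubst_comp. apply fpsubst_agree.
    intros v Hv. destruct (Nat.eqb_spec v a).
    - simpl. rewrite Nat.eqb_refl. reflexivity.
    - simpl. symmetry. apply tpsubst_fresh. intros w Hw.
      assert (tfvb (sg v) <= a') by (apply (bnd_ge (fun v => tfvb (sg v))); auto).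
      destruct (Nat.eqb_spec w a'); [lia|reflexivity]. }
  change (fpsubst sg (fand (eqf s t) (fsubst1 a s phi))) with
    (fand (eqf (tpsubst sg s) (tpsubst sg t)) (fpsubst sg (fsubst1 a s phi))).
  rewrite !Key. apply L23.
Qed.

Lemma logax_subst V (a b : formula V) : logax a b -> forall sg, logax (fpsubst sg a) (fpsubst sg b).
Proof.
  intros H sg. destruct H; simpl; try constructor.
  - rewrite fpsubst_open. apply L10.
  - rewrite fpsubst_flift. apply L11.
  - rewrite fpsubst_flift. apply L12.
  - rewrite fpsubst_open. apply L13.
  - rewrite fpsubst_flift, tpsubst_tlift. apply L14.
  - rewrite fpsubst_flift. apply L15.
  - apply L23_subst.
Qed.

Lemma axinst_subst V T (a b : formula V) sg : axinst T a b -> axinst T (fpsubst sg a) (fpsubst sg b).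
Proof.
  intros [H|[c [sg0 [Hc [-> ->]]]]].
  - left; apply logax_subst; auto.
  - right. exists c, (fun v => tpsubst sg (sg0 v)). rewrite !fpsubst_comp. auto.
Qed.

Fixpoint csubst {V} (sg : nat -> term V) (C : ctx V) : ctx V :=
  match C with
  | hole => hole
  | cand_l C' b => cand_l (csubst sg C') (fpsubst sg b)
  | cand_r a C' => cand_r (fpsubst sg a) (csubst sg C')
  | cor_l C' b => cor_l (csubst sg C') (fpsubst sg b)
  | cor_r a C' => cor_r (fpsubst sg a) (csubst sg C')
  | call t C' => call (tpsubst sg t) (csubst (lift sg) C')
  | cex C' => cex (csubst (lift sg) C')
  end.

Fixpoint hsg {V} (sg : nat -> term V) (C : ctx V) : nat -> term V :=
  match C with
  | hole => sg
  | cand_l C' _ | cand_r _ C' | cor_l C' _ | cor_r _ C' => hsg sg C'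
  | call _ C' | cex C' => hsg (lift sg) C'
  end.

Lemma fpsubst_plug V (C : ctx V) : forall sg x,
  fpsubst sg (plug C x) = plug (csubst sg C) (fpsubst (hsg sg C) x).
Proof. induction C; intros; simpl; f_equal; auto. Qed.

Fixpoint ccomp {V} (C : ctx V) (D : ctx V) : ctx V :=
  match C with
  | hole => D
  | cand_l C' b => cand_l (ccomp C' D) b
  | cand_r a C' => cand_r a (ccomp C' D)
  | cor_l C' b => cor_l (ccomp C' D) b
  | cor_r a C' => cor_r a (ccomp C' D)
  | call t C' => call t (ccomp C' D)
  | cex C' => cex (ccomp C' D)
  end.

Lemma plug_comp V (C D : ctx V) x : plug C (plug D x) = plug (ccomp C D) x.
Proof. induction C; simpl; f_equal; auto. Qed.

Lemma step_subst V T (a b : formula V) sg : step T a b -> step T (fpsubst sg a) (fpsubst sg b).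
Proof.
  intros [C [x [y [Hxy [-> ->]]]]]. exists (csubst sg C), (fpsubst (hsg sg C) x), (fpsubst (hsg sg C) y).
  split; [apply axinst_subst; auto|]. split; apply fpsubst_plug.
Qed.

Lemma step_plug V T (a b : formula V) C : step T a b -> step T (plug C a) (plug C b).
Proof.
  intros [D [x [y [Hxy [-> ->]]]]]. exists (ccomp C D), x, y. rewrite !plug_comp. auto.
Qed.

Inductive chain {V} (T : cond V -> Prop) (k : nat) : formula V -> formula V -> Prop :=
| ch_refl a : wf_form k a -> chain T k a a
| ch_step a b c : wf_form k a -> step T a b -> chain T k b c -> chain T k a c.

Lemma chain_wf_l V T k (a b : formula V) : chain T k a b -> wf_form k a.
Proof. destruct 1; auto. Qed.
Lemma chain_wf_r V T k (a b : formula V) : chain T k a b -> wf_form k b.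
Proof. induction 1; auto. Qed.

Lemma proves_chain V T (a b : formula V) : proves T a b <-> chain T 0 a b.
Proof.
  split; induction 1.
  - apply ch_refl; auto.
  - eapply ch_step; eauto.
  - apply pr_refl; auto.
  - eapply pr_step; eauto.
Qed.

Lemma chain_trans V T k (a b c : formula V) : chain T k a b -> chain T k b c -> chain T k a c.
Proof. induction 1; intros; auto. eapply ch_step; eauto. Qed.

Lemma chain_step1 V T k (a b : formula V) : wf_form k a -> wf_form k b -> step T a b -> chain T k a b.
Proof. intros; eapply ch_step; eauto. apply ch_refl; auto. Qed.

Lemma chain_ax V T k (a b : formula V) : wf_form k a -> wf_form k b -> logax a b -> chain T k a b.
Proof. intros. apply chain_step1; auto. exists hole, a, b. split; [left; auto|auto]. Qed.

Lemma chain_plug V T k j C (a b : formula V) : chain T k a b ->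
  (forall x, wf_form k x -> wf_form j (plug C x)) -> chain T j (plug C a) (plug C b).
Proof.
  induction 1; intros HC.
  - apply ch_refl; auto.
  - eapply ch_step; eauto. apply step_plug; auto.
Qed.

Lemma chain_subst V T k j (a b : formula V) sg : chain T k a b -> k <= j ->
  (forall v, wf_term j (sg v)) -> chain T j (fpsubst sg a) (fpsubst sg b).
Proof.
  induction 1; intros Hk Hs.
  - apply ch_refl. apply wf_fpsubst; auto. eapply wf_form_mono; eauto.
  - eapply ch_step; eauto. apply wf_fpsubst; auto. eapply wf_form_mono; eauto.
    apply step_subst; auto.
Qed.

Definition der {V} T (a b : formula V) := chain T 0 a b.

Section Der.
Context {V : vocab} (T : cond V -> Prop).

Lemma der_wf_l a b : der T a b -> sigma_formula a. Proof. apply chain_wf_l. Qed.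
Lemma der_wf_r a b : der T a b -> sigma_formula b. Proof. apply chain_wf_r. Qed.
Lemma der_refl a : sigma_formula a -> der T a a. Proof. apply ch_refl. Qed.
Lemma der_trans a b c : der T a b -> der T b c -> der T a c. Proof. apply chain_trans. Qed.
Lemma der_ax a b : sigma_formula a -> sigma_formula b -> logax a b -> der T a b.
Proof. apply chain_ax. Qed.

Lemma der_andL a b c : der T a b -> sigma_formula c -> der T (fand a c) (fand b c).
Proof. intros H Hc. apply (chain_plug _ _ _ _ (cand_l hole c) _ _ H). intros; simpl; split; auto. Qed.
Lemma der_andR a b c : der T a b -> sigma_formula c -> der T (fand c a) (fand c b).
Proof. intros H Hc. apply (chain_plug _ _ _ _ (cand_r c hole) _ _ H). intros; simpl; split; auto. Qed.
Lemma der_orL a b c : der T a b -> sigma_formula c -> der T (f_or a c) (f_or b c).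
Proof. intros H Hc. apply (chain_plug _ _ _ _ (cor_l hole c) _ _ H). intros; simpl; split; auto. Qed.
Lemma der_orR a b c : der T a b -> sigma_formula c -> der T (f_or c a) (f_or c b).
Proof. intros H Hc. apply (chain_plug _ _ _ _ (cor_r c hole) _ _ H). intros; simpl; split; auto. Qed.

Lemma and_e1 a b : sigma_formula a -> sigma_formula b -> der T (fand a b) a.
Proof. intros; apply der_ax; [split|..]; auto. apply L3. Qed.
Lemma and_e2 a b : sigma_formula a -> sigma_formula b -> der T (fand a b) b.
Proof. intros; apply der_ax; [split|..]; auto. apply L4. Qed.
Lemma and_dup a : sigma_formula a -> der T a (fand a a).
Proof. intros; apply der_ax; [|split|]; auto. apply L5. Qed.
Lemma or_i1 a b : sigma_formula a -> sigma_formula b -> der T a (f_or a b).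
Proof. intros; apply der_ax; [|split|]; auto. apply L6. Qed.
Lemma or_i2 a b : sigma_formula a -> sigma_formula b -> der T b (f_or a b).
Proof. intros; apply der_ax; [|split|]; auto. apply L7. Qed.
Lemma or_dup a : sigma_formula a -> der T (f_or a a) a.
Proof. intros; apply der_ax; [split|..]; auto. apply L8. Qed.

Lemma and_intro g a b : der T g a -> der T g b -> der T g (fand a b).
Proof.
  intros Ha Hb. pose proof (der_wf_l _ _ Ha) as Hg.
  eapply der_trans; [apply and_dup; auto|].
  eapply der_trans; [apply (der_andL _ _ _ Ha Hg)|]. apply der_andR; auto. eapply der_wf_r; eauto.
Qed.

Lemma or_elim a b c : der T a c -> der T b c -> der T (f_or a b) c.
Proof.
  intros Ha Hb. pose proof (der_wf_l _ _ Hb).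
  eapply der_trans; [apply (der_orL _ _ _ Ha H)|].
  eapply der_trans; [apply (der_orR _ _ _ Hb); eapply der_wf_r; eauto|]. apply or_dup. eapply der_wf_r; eauto.
Qed.

Lemma der_cut g f d : der T (fand g f) d -> der T g (f_or d f) -> der T g d.
Proof.
  intros H1 H2. pose proof (der_wf_l _ _ H2) as Hg. pose proof (der_wf_r _ _ H2) as Hdf.
  unfold sigma_formula in Hdf; simpl in Hdf; destruct Hdf as [Hd Hf].
  eapply der_trans; [apply and_intro; [exact H2| apply der_refl; auto]|].
  eapply der_trans; [apply der_ax; [| |apply L9]; unfold sigma_formula in *; simpl; tauto|].
  apply or_elim.
  - apply and_e1; auto.
  - eapply der_trans; [|exact H1]. apply and_intro; [apply and_e2|apply and_e1]; auto.
Qed.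

End Der.

Section Henkin.
Context {V : vocab} (T : cond V -> Prop) (HaIn : par V (sIn V) = 2).

Definition sig_c (c : nat) : nat -> term V := fun v => if v =? c then bvar 0 else fvar v.

Lemma sig_c_wf c v : wf_term 1 (sig_c c v).
Proof. unfold sig_c. destruct (v =? c); simpl; auto. Qed.

Lemma sig_c_fresh_f c (phi : formula V) : ffvb phi <= c -> fpsubst (sig_c c) phi = phi.
Proof.
  intros H. apply fpsubst_fresh. intros v Hv. unfold sig_c. destruct (Nat.eqb_spec v c); auto; lia.
Qed.

Lemma sig_c_fresh_t c (t : term V) : tfvb t <= c -> tpsubst (sig_c c) t = t.
Proof.
  intros H. apply tpsubst_fresh. intros v Hv. unfold sig_c. destruct (Nat.eqb_spec v c); auto; lia.
Qed.

Lemma sig_c_open c (psi : formula V) : ffvb psi <= c -> wf_form 1 psi ->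
  fpsubst (sig_c c) (open psi (fvar c)) = psi.
Proof.
  intros H Hw. rewrite fpsubst_open. simpl. unfold sig_c at 2. rewrite Nat.eqb_refl.
  rewrite fpsubst_fresh. apply finst_bvar_id; auto.
  intros v Hv. unfold sig_c. destruct (Nat.eqb_spec v c); auto; lia.
Qed.

Lemma henkin_ex g d psi c : sigma_formula g -> sigma_formula d -> sigma_formula (fex psi) ->
  ffvb g <= c -> ffvb d <= c -> ffvb psi <= c ->
  ~ der T (fand g (fex psi)) d -> ~ der T (fand (fand g (fex psi)) (open psi (fvar c))) d.
Proof.
  intros Hg Hd Hp Hcg Hcd Hcp Hn H. apply Hn. set (g' := fand g (fex psi)) in *.
  assert (Hg' : sigma_formula g') by (split; auto).
  assert (Hc' : ffvb g' <= c) by (simpl; lia).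
  pose proof (chain_subst _ _ 0 1 _ _ (sig_c c) H ltac:(lia) (sig_c_wf c)) as H1.
  assert (E1 : fpsubst (sig_c c) (fand g' (open psi (fvar c))) = fand g' psi).
  { change (fand (fpsubst (sig_c c) g') (fpsubst (sig_c c) (open psi (fvar c))) = fand g' psi).
    rewrite sig_c_fresh_f by auto. rewrite sig_c_open; auto. }
  rewrite E1, (sig_c_fresh_f c d Hcd) in H1.
  pose proof (chain_plug _ _ 1 0 (cex hole) _ _ H1 ltac:(intros; simpl; auto)) as H2. simpl in H2.
  eapply der_trans; [apply and_intro; [apply der_refl; auto | apply and_e2; auto]|].
  eapply der_trans; [apply der_ax with (b := fex (fand g' psi)); [split; auto| |]|].
  - simpl. split; [|exact Hp]. apply wf_form_mono with 0; auto.
  - rewrite <- (flift_wf_id _ g' 0 Hg') at 2. apply L12.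
  - eapply der_trans; [exact H2|].
    apply der_ax; [exact (wf_form_mono _ d 0 1 ltac:(lia) Hd) | exact Hd |].
    rewrite <- (flift_wf_id _ d 0 Hd) at 1. apply L11.
Qed.

Lemma inf_wf k (t s : term V) : wf_term k t -> wf_term k s -> wf_form k (inf t s).
Proof. intros. split. simpl; auto. repeat constructor; auto. Qed.

Lemma henkin_all g d s psi c : sigma_formula g -> sigma_formula d -> sigma_formula (fall s psi) ->
  ffvb g <= c -> ffvb d <= c -> ffvb (fall s psi) <= c ->
  ~ der T g (f_or d (fall s psi)) ->
  ~ der T (fand g (inf (fvar c) s)) (f_or (f_or d (fall s psi)) (open psi (fvar c))).
Proof.
  intros Hg Hd Hp Hcg Hcd Hcp Hn H. apply Hn. set (phi := fall s psi) in *.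
  set (d' := f_or d phi) in *. destruct Hp as [Hs Hpsi].
  assert (Hd' : sigma_formula d') by (split; auto; split; auto).
  assert (Hc' : ffvb d' <= c) by (change (max (ffvb d) (ffvb phi) <= c); lia).
  unfold phi in Hcp; simpl in Hcp.
  pose proof (chain_subst _ _ 0 1 _ _ (sig_c c) H ltac:(lia) (sig_c_wf c)) as H1.
  assert (E1 : fpsubst (sig_c c) (fand g (inf (fvar c) s)) = fand g (inf (bvar 0) s)).
  { change (fand (fpsubst (sig_c c) g) (fatom (sIn V) [sig_c c c; tpsubst (sig_c c) s]) = fand g (inf (bvar 0) s)).
    rewrite sig_c_fresh_f by auto. rewrite sig_c_fresh_t by lia. unfold sig_c; rewrite Nat.eqb_refl. reflexivity. }
  assert (E2 : fpsubst (sig_c c) (f_or d' (open psi (fvar c))) = f_or d' psi).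
  { change (f_or (fpsubst (sig_c c) d') (fpsubst (sig_c c) (open psi (fvar c))) = f_or d' psi).
    rewrite sig_c_fresh_f by auto. rewrite sig_c_open; auto. lia. }
  rewrite E1, E2 in H1.
  pose proof (chain_plug _ _ 1 0 (call s hole) _ _ H1 ltac:(intros; simpl; auto)) as H2. simpl in H2.
  change (chain T 0 (fall s (fand g (inf (bvar 0) s))) (fall s (f_or d' psi))) in H2.
  eapply der_trans; [|eapply der_trans; [exact H2|]].
  - apply der_ax; auto.
    + split; auto. split. apply wf_form_mono with 0; auto. apply inf_wf; simpl; auto.
      apply wf_term_mono with 0; auto.
    + rewrite <- (flift_wf_id _ g 0 Hg) at 2. rewrite <- (tlift_wf_id _ s 0 Hs) at 2. apply L14.
  - eapply der_trans; [apply der_ax with (b := f_or d' phi)|].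
    + split; auto. split; auto. apply wf_form_mono with 0; auto.
    + split; auto. split; auto.
    + rewrite <- (flift_wf_id _ d' 0 Hd') at 1. apply L15.
    + apply or_elim. apply der_refl; auto. apply or_i2; auto. split; auto.
Qed.

End Henkin.

Section Constr.
Context {V : vocab} (T : cond V -> Prop) (HaIn : par V (sIn V) = 2)
  (enum : nat -> option (formula V)) (Hsurj : forall phi, exists n, enum n = Some phi)
  (g0 d0 : formula V) (Hg0 : sigma_formula g0) (Hd0 : sigma_formula d0) (H0 : ~ der T g0 d0).

Definition fr (g d phi : formula V) := max (ffvb g) (max (ffvb d) (ffvb phi)).
Definition ex_part (phi : formula V) := match phi with fex psi => Some psi | _ => None end.
Definition all_part (phi : formula V) := match phi with fall s psi => Some (s, psi) | _ => None end.

Lemma ex_part_spec phi psi : ex_part phi = Some psi -> phi = fex psi.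
Proof. destruct phi; simpl; intros H; inversion H; auto. Qed.
Lemma all_part_spec phi s psi : all_part phi = Some (s, psi) -> phi = fall s psi.
Proof. destruct phi; simpl; intros H; inversion H; auto. Qed.

Definition stage (p : formula V * formula V) (o : option (formula V)) : formula V * formula V :=
  match o with
  | None => p
  | Some phi =>
    if excluded_middle_informative (sigma_formula phi) then
      let c := fr (fst p) (snd p) phi in
      if excluded_middle_informative (der T (fand (fst p) phi) (snd p)) then
        match all_part phi with
        | Some (s, psi) => (fand (fst p) (inf (fvar c) s), f_or (f_or (snd p) phi) (open psi (fvar c)))
        | None => (fst p, f_or (snd p) phi)
        end
      else
        match ex_part phi with
        | Some psi => (fand (fand (fst p) phi) (open psi (fvar c)), snd p)
        | None => (fand (fst p) phi, snd p)
        end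
    else p
  end.

Definition Inv (p : formula V * formula V) :=
  sigma_formula (fst p) /\ sigma_formula (snd p) /\ ~ der T (fst p) (snd p).

Lemma stage_inv p o : Inv p ->
  Inv (stage p o) /\ der T (fst (stage p o)) (fst p) /\ der T (snd p) (snd (stage p o)).
Proof.
  intros [Hg [Hd Hn]]. destruct p as [g d]. simpl in *. destruct o as [phi|].
  2:{ simpl. repeat split; auto; apply der_refl; auto. }
  simpl. destruct (excluded_middle_informative (sigma_formula phi)) as [Hp|Hp].
  2:{ repeat split; auto; apply der_refl; auto. }
  destruct (excluded_middle_informative (der T (fand g phi) d)) as [Hdr|Hdr].
  - assert (Hn2 : ~ der T g (f_or d phi)) by (intro H; apply Hn; eapply der_cut; eauto).
    destruct (all_part phi) as [[s psi]|] eqn:E.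
    + apply all_part_spec in E. subst phi. simpl.
      pose proof Hp as [Hs Hpsi].
      assert (Hi : sigma_formula (inf (fvar (fr g d (fall s psi))) s)) by (apply inf_wf; simpl; auto).
      assert (Ho : sigma_formula (open psi (fvar (fr g d (fall s psi))))) by (apply wf_open; simpl; auto).
      refine (conj (conj _ (conj _ _)) (conj _ _)); simpl.
      * split; auto.
      * split; auto. split; auto.
      * apply henkin_all; auto; unfold fr; lia.
      * apply and_e1; auto.
      * eapply der_trans; apply or_i1; auto. split; auto.
    + refine (conj (conj _ (conj _ _)) (conj _ _)); simpl; auto.
      split; auto. apply der_refl; auto. apply or_i1; auto.
  - destruct (ex_part phi) as [psi|] eqn:E.
    + apply ex_part_spec in E. subst phi. simpl.
      assert (Ho : sigma_formula (open psi (fvar (fr g d (fex psi))))) by (apply wf_open; simpl; auto).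
      refine (conj (conj _ (conj _ _)) (conj _ _)); simpl.
      * split; auto. split; auto.
      * auto.
      * apply henkin_ex; auto; unfold fr; simpl; lia.
      * eapply der_trans; apply and_e1; auto. split; auto.
      * apply der_refl; auto.
    + refine (conj (conj _ (conj _ _)) (conj _ _)); simpl; auto.
      split; auto. apply and_e1; auto. apply der_refl; auto.
Qed.

Lemma stage_some p phi : Inv p -> sigma_formula phi ->
  (der T (fst (stage p (Some phi))) phi /\
     forall psi, phi = fex psi -> exists c, der T (fst (stage p (Some phi))) (open psi (fvar c)))
  \/ (der T phi (snd (stage p (Some phi))) /\
     forall s psi, phi = fall s psi -> exists c, der T (fst (stage p (Some phi))) (inf (fvar c) s) /\
        der T (open psi (fvar c)) (snd (stage p (Some phi)))).
Proof.
  intros [Hg [Hd Hn]] Hp. destruct p as [g d]. simpl in *.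
  destruct (excluded_middle_informative (sigma_formula phi)) as [_|Hp']; [|contradiction].
  destruct (excluded_middle_informative (der T (fand g phi) d)) as [Hdr|Hdr].
  - right. destruct (all_part phi) as [[s psi]|] eqn:E.
    + apply all_part_spec in E. subst phi. simpl.
      pose proof Hp as [Hs Hpsi].
      assert (Hi : sigma_formula (inf (fvar (fr g d (fall s psi))) s)) by (apply inf_wf; simpl; auto).
      assert (Ho : sigma_formula (open psi (fvar (fr g d (fall s psi))))) by (apply wf_open; simpl; auto).
      split.
      * eapply der_trans; [apply or_i2|apply or_i1]; auto. split; auto.
      * intros s' psi' Heq. inversion Heq; subst. exists (fr g d (fall s' psi')). split.
        apply and_e2; auto. apply or_i2; auto. split; auto.
    + simpl. split. apply or_i2; auto. intros s psi ->. simpl in E. discriminate.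
  - left. destruct (ex_part phi) as [psi|] eqn:E.
    + apply ex_part_spec in E. subst phi. simpl.
      assert (Ho : sigma_formula (open psi (fvar (fr g d (fex psi))))) by (apply wf_open; simpl; auto).
      split.
      * eapply der_trans; [apply and_e1|apply and_e2]; auto. split; auto.
      * intros psi' Heq. inversion Heq; subst. exists (fr g d (fex psi')).
        apply and_e2; auto. split; auto.
    + simpl. split. apply and_e2; auto. intros psi ->. simpl in E. discriminate.
Qed.

Fixpoint seqp (n : nat) : formula V * formula V :=
  match n with 0 => (g0, d0) | S n => stage (seqp n) (enum n) end.
Definition gs n := fst (seqp n).
Definition ds n := snd (seqp n).

Lemma seqp_inv n : Inv (seqp n).
Proof. induction n; simpl. repeat split; auto. apply stage_inv; auto. Qed.

Lemma gs_mono m n : m <= n -> der T (gs n) (gs m).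
Proof.
  induction 1. apply der_refl, seqp_inv.
  eapply der_trans; [|exact IHle]. apply (stage_inv _ (enum m0) (seqp_inv m0)).
Qed.
Lemma ds_mono m n : m <= n -> der T (ds m) (ds n).
Proof.
  induction 1. apply der_refl, seqp_inv.
  eapply der_trans; [exact IHle|]. apply (stage_inv _ (enum m0) (seqp_inv m0)).
Qed.

Definition Gam (phi : formula V) := exists n, der T (gs n) phi.
Definition Del (phi : formula V) := exists n, der T phi (ds n).

Lemma Gam_g0 : Gam g0. Proof. exists 0. apply der_refl; auto. Qed.
Lemma Del_d0 : Del d0. Proof. exists 0. apply der_refl; auto. Qed.
Lemma Gam_up a b : Gam a -> der T a b -> Gam b.
Proof. intros [n H] Hb. exists n. eapply der_trans; eauto. Qed.
Lemma Gam_sig a : Gam a -> sigma_formula a.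
Proof. intros [n H]. eapply der_wf_r; eauto. Qed.

Lemma Gam_Del a : Gam a -> Del a -> False.
Proof.
  intros [m Hm] [n Hn]. destruct (seqp_inv (max m n)) as [_ [_ Hc]]. apply Hc.
  eapply der_trans; [apply (gs_mono m); lia|]. eapply der_trans; [exact Hm|].
  eapply der_trans; [exact Hn|]. apply ds_mono; lia.
Qed.

Lemma Gam_and a b : Gam a -> Gam b -> Gam (fand a b).
Proof.
  intros [m Hm] [n Hn]. exists (max m n). apply and_intro.
  eapply der_trans; [apply gs_mono|exact Hm]; lia.
  eapply der_trans; [apply gs_mono|exact Hn]; lia.
Qed.

Lemma Gam_or_Del a : sigma_formula a -> Gam a \/ Del a.
Proof.
  intros Ha. destruct (Hsurj a) as [n En].
  destruct (stage_some (seqp n) a (seqp_inv n) Ha) as [[H _]|[H _]].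
  - left. exists (S n). unfold gs; simpl. rewrite En. auto.
  - right. exists (S n). unfold ds; simpl. rewrite En. auto.
Qed.

Lemma Gam_or a b : Gam (f_or a b) -> Gam a \/ Gam b.
Proof.
  intros H. pose proof (Gam_sig _ H) as [Ha Hb].
  destruct (Gam_or_Del a Ha) as [|[m Hm]]; auto.
  destruct (Gam_or_Del b Hb) as [|[n Hn]]; auto.
  exfalso. apply (Gam_Del _ H). exists (max m n). apply or_elim.
  eapply der_trans; [exact Hm|apply ds_mono]; lia.
  eapply der_trans; [exact Hn|apply ds_mono]; lia.
Qed.

Lemma Gam_ex psi : Gam (fex psi) -> exists c, Gam (open psi (fvar c)).
Proof.
  intros H. pose proof (Gam_sig _ H) as Hs. destruct (Hsurj (fex psi)) as [n En].
  destruct (stage_some (seqp n) _ (seqp_inv n) Hs) as [[_ H2]|[H2 _]].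
  - destruct (H2 psi eq_refl) as [c Hc]. exists c, (S n). unfold gs; simpl. rewrite En. auto.
  - exfalso. apply (Gam_Del _ H). exists (S n). unfold ds; simpl. rewrite En. auto.
Qed.

Lemma Gam_all s psi : sigma_formula (fall s psi) -> ~ Gam (fall s psi) ->
  exists c, Gam (inf (fvar c) s) /\ ~ Gam (open psi (fvar c)).
Proof.
  intros Hs HG. destruct (Hsurj (fall s psi)) as [n En].
  destruct (stage_some (seqp n) _ (seqp_inv n) Hs) as [[H2 _]|[_ H2]].
  - exfalso. apply HG. exists (S n). unfold gs; simpl. rewrite En. auto.
  - destruct (H2 s psi eq_refl) as [c [Hc1 Hc2]]. exists c. split.
    + exists (S n). unfold gs; simpl. rewrite En. auto.
    + intros HG'. apply (Gam_Del _ HG'). exists (S n). unfold ds; simpl. rewrite En. auto.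
Qed.

End Constr.

Section Sem.
Context {V : vocab} (M : structure V).

Definition ins (k : nat) (d : dom M) (be : nat -> dom M) : nat -> dom M :=
  fun n => if n <? k then be n else if n =? k then d else be (pred n).

Lemma teval_ext rho (t : term V) : forall be be', (forall n, be n = be' n) ->
  teval M rho be t = teval M rho be' t.
Proof.
  induction t using term_ind'; intros be be' E; simpl; auto.
  f_equal. apply map_ext_Forall'. eapply Forall_impl; [|exact H]. intros a Ha; auto.
Qed.

Lemma sat_ext rho (phi : formula V) : forall be be', (forall n, be n = be' n) ->
  (sat M rho be phi <-> sat M rho be' phi).
Proof.
  induction phi; intros be be' E; simpl.
  - erewrite map_ext; [reflexivity|]. intros; apply teval_ext; auto.
  - tauto.
  - tauto.
  - rewrite (IHphi1 be be'), (IHphi2 be be'); auto. tauto.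
  - rewrite (IHphi1 be be'), (IHphi2 be be'); auto. tauto.
  - rewrite (teval_ext _ t be be' E). split; intros H d Hd; specialize (H d Hd);
      (eapply IHphi; [|exact H]); intros [|n]; simpl; auto.
  - split; intros [d H]; exists d; (eapply IHphi; [|exact H]); intros [|n]; simpl; auto.
Qed.

Lemma teval_tlift rho (u : term V) : forall k d be,
  teval M rho (ins k d be) (tlift k u) = teval M rho be u.
Proof.
  induction u using term_ind'; intros k d be; simpl; auto.
  - unfold ins. cbn -[Nat.ltb Nat.eqb]; nat_cases; cbn -[Nat.ltb Nat.eqb]; nat_cases; auto; try lia.
  - f_equal. rewrite map_map. apply map_ext_Forall'. eapply Forall_impl; [|exact H]. auto.
Qed.

Lemma ins0 d (be : nat -> dom M) n : ins 0 d be n = scons d be n.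
Proof. unfold ins. destruct n; simpl; auto. Qed.

Lemma teval_tlift0 rho (u : term V) d be : teval M rho (scons d be) (tlift 0 u) = teval M rho be u.
Proof. rewrite <- (teval_tlift rho u 0 d be). apply teval_ext. intros; symmetry; apply ins0. Qed.

Lemma teval_tinst rho (t : term V) : forall k u be,
  teval M rho be (tinst k u t) = teval M rho (ins k (teval M rho be u) be) t.
Proof.
  induction t using term_ind'; intros k u be; simpl; auto.
  - unfold ins. nat_cases; simpl; auto.
  - f_equal. rewrite map_map. apply map_ext_Forall'. eapply Forall_impl; [|exact H]. auto.
Qed.

Lemma ins_S k d e (be : nat -> dom M) n : ins (S k) d (scons e be) n = scons e (ins k d be) n.
Proof. unfold ins. destruct n; simpl; auto. nat_cases; simpl; auto; try lia.
  destruct n; simpl; [lia|]. reflexivity. Qed.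

Lemma sat_finst rho (phi : formula V) : forall k u be,
  sat M rho be (finst k u phi) <-> sat M rho (ins k (teval M rho be u) be) phi.
Proof.
  induction phi; intros k u be; simpl.
  - rewrite map_map. erewrite map_ext; [reflexivity|]. intros; apply teval_tinst.
  - tauto.
  - tauto.
  - rewrite IHphi1, IHphi2. tauto.
  - rewrite IHphi1, IHphi2. tauto.
  - rewrite teval_tinst. split; intros H d Hd; specialize (H d Hd).
    + rewrite IHphi in H. rewrite teval_tlift0 in H. eapply sat_ext; [|exact H].
      intros; rewrite ins_S; reflexivity.
    + rewrite IHphi. rewrite teval_tlift0. eapply sat_ext; [|exact H].
      intros; rewrite ins_S; reflexivity.
  - split; intros [d H]; exists d.
    + rewrite IHphi in H. rewrite teval_tlift0 in H. eapply sat_ext; [|exact H].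
      intros; rewrite ins_S; reflexivity.
    + rewrite IHphi. rewrite teval_tlift0. eapply sat_ext; [|exact H].
      intros; rewrite ins_S; reflexivity.
Qed.

Lemma sat_open rho (phi : formula V) u be :
  sat M rho be (open phi u) <-> sat M rho (scons (teval M rho be u) be) phi.
Proof. unfold open. rewrite sat_finst. apply sat_ext. intros; apply ins0. Qed.

Lemma teval_tlift0' rho (u : term V) be : teval M rho be (tlift 0 u) = teval M rho (fun n => be (S n)) u.
Proof. rewrite <- (teval_tlift0 rho u (be 0)). apply teval_ext. intros [|n]; reflexivity. Qed.

Lemma teval_tpsubst rho rho' (t : term V) : forall sg be, (forall v, teval M rho be (sg v) = rho' v) ->
  teval M rho be (tpsubst sg t) = teval M rho' be t.
Proof.
  induction t using term_ind'; intros sg be E; simpl; auto.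
  f_equal. rewrite map_map. apply map_ext_Forall'. eapply Forall_impl; [|exact H]. intros; auto.
Qed.

Lemma sat_fpsubst rho rho' (phi : formula V) : forall sg be, (forall be v, teval M rho be (sg v) = rho' v) ->
  (sat M rho be (fpsubst sg phi) <-> sat M rho' be phi).
Proof.
  induction phi; intros sg be E; simpl.
  - rewrite map_map. erewrite map_ext; [reflexivity|]. intros; apply teval_tpsubst; auto.
  - tauto.
  - tauto.
  - rewrite IHphi1, IHphi2; auto. tauto.
  - rewrite IHphi1, IHphi2; auto. tauto.
  - rewrite (teval_tpsubst rho rho'); auto. split; intros H d Hd; specialize (H d Hd);
      (rewrite IHphi in *; [exact H|]); intros; rewrite teval_tlift0'; auto.
  - split; intros [d H]; exists d; (rewrite IHphi in *; [exact H|]); intros; rewrite teval_tlift0'; auto.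
Qed.

End Sem.

Section Model.
Context {V : vocab} (T : cond V -> Prop)
  (HaEq : par V (sEq V) = 2) (HaNeq : par V (sNeq V) = 2)
  (HaIn : par V (sIn V) = 2) (HaNin : par V (sNin V) = 2)
  (G : formula V -> Prop)
  (GU : forall a b, G a -> der T a b -> G b)
  (GS : forall a, G a -> sigma_formula a)
  (GA : forall a b, G a -> G b -> G (fand a b))
  (GT : G ftop) (GB : ~ G fbot)
  (GO : forall a b, G (f_or a b) -> G a \/ G b)
  (GE : forall psi, G (fex psi) -> exists c, G (open psi (fvar c)))
  (GF : forall s psi, sigma_formula (fall s psi) -> ~ G (fall s psi) ->
        exists c, G (inf (fvar c) s) /\ ~ G (open psi (fvar c))).

Definition wf0 (t : term V) := wf_term 0 t.
Definition E (t u : term V) := G (eqf t u).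

Lemma atom2_wf p (t u : term V) : par V p = 2 -> wf0 t -> wf0 u -> sigma_formula (fatom p [t; u]).
Proof. intros. split. simpl; auto. repeat constructor; auto. Qed.

Lemma GU1 a b : G a -> sigma_formula b -> logax a b -> G b.
Proof. intros Ha Hb H. eapply GU; eauto. apply der_ax; auto. Qed.

Lemma E_wf t u : E t u -> wf0 t /\ wf0 u.
Proof. intros H. apply GS in H. destruct H as [_ H]. inversion H; subst. inversion H3; subst. auto. Qed.

Lemma E_refl t : wf0 t -> E t t.
Proof. intros. eapply GU1; [exact GT| |apply L20]. apply atom2_wf; auto. Qed.

Lemma E_sym t u : E t u -> E u t.
Proof. intros H. destruct (E_wf _ _ H). eapply GU1; [exact H| |apply L21]. apply atom2_wf; auto. Qed.

Lemma E_trans t u w : E t u -> E u w -> E t w.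
Proof.
  intros H1 H2. destruct (E_wf _ _ H1). destruct (E_wf _ _ H2).
  eapply GU1; [apply GA; [exact H1|exact H2]| |apply L22]. apply atom2_wf; auto.
Qed.

Lemma F2wf ts us : Forall2 E ts us -> Forall wf0 ts.
Proof. induction 1; constructor; auto. apply (E_wf _ _ H). Qed.

Section Cong.
Variable H : list (term V) -> formula V.
Variable K N : nat.
Hypothesis Hsub : forall sg l, (forall v, v < K -> sg v = fvar v) ->
  fpsubst sg (H l) = H (map (tpsubst sg) l).
Hypothesis Hwf : forall l, Forall wf0 l -> length l = N -> sigma_formula (H l).

Lemma cong1 pre post t u : Forall wf0 pre -> Forall wf0 post -> length (pre ++ t :: post) = N ->
  E t u -> G (H (pre ++ t :: post)) -> G (H (pre ++ u :: post)).
Proof.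
  intros Hpre Hpost Hl Htu HG. destruct (E_wf _ _ Htu) as [Ht Hu].
  set (a := max K (max (listmax (map tfvb pre)) (listmax (map tfvb post)))).
  set (phi := H (pre ++ fvar a :: post)).
  assert (Hs : forall w, fsubst1 a w phi = H (pre ++ w :: post)).
  { intros w. unfold fsubst1, phi. rewrite Hsub.
    - rewrite map_app. simpl. rewrite Nat.eqb_refl. f_equal. f_equal.
      + apply map_id_Forall. rewrite Forall_forall. intros x Hx. apply tpsubst_fresh.
        intros v Hv. assert (tfvb x <= listmax (map tfvb pre)) by (apply listmax_ge, in_map; auto).
        destruct (Nat.eqb_spec v a); auto; lia.
      + f_equal. apply map_id_Forall. rewrite Forall_forall. intros x Hx. apply tpsubst_fresh.
        intros v Hv. assert (tfvb x <= listmax (map tfvb post)) by (apply listmax_ge, in_map; auto).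
        destruct (Nat.eqb_spec v a); auto; lia.
    - intros v Hv. destruct (Nat.eqb_spec v a); auto; lia. }
  assert (Hwu : sigma_formula (H (pre ++ u :: post))).
  { apply Hwf. apply Forall_app; split; auto. rewrite length_app in *; simpl in *; lia. }
  rewrite <- Hs in HG, Hwu |- *. eapply GU1; [apply GA; [exact Htu|exact HG]|exact Hwu|apply L23].
Qed.

Lemma cong_list ts us : Forall2 E ts us -> forall pre, Forall wf0 pre -> length (pre ++ ts) = N ->
  G (H (pre ++ ts)) -> G (H (pre ++ us)).
Proof.
  induction 1 as [|t y ts l' Hty HF IH]; intros pre Hpre Hl HG; auto.
  assert (Hts : Forall wf0 ts) by (apply (F2wf _ _ HF)).
  apply cong1 with (u := y) in HG; auto.
  replace (pre ++ y :: l') with ((pre ++ [y]) ++ l') by (rewrite <- app_assoc; auto).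
  apply IH; auto.
  - apply Forall_app; split; auto. constructor; auto. apply (E_wf _ _ Hty).
  - rewrite !length_app in *; simpl in *; lia.
  - rewrite <- app_assoc. exact HG.
Qed.

Lemma cong_list0 ts us : length ts = N -> Forall2 E ts us -> G (H ts) -> G (H us).
Proof. intros. apply (cong_list ts us H1 []); auto. Qed.
End Cong.

Definition rep (t : term V) : term V := epsilon (inhabits (fvar 0)) (fun u => wf0 u /\ E t u).

Lemma rep_spec t : wf0 t -> wf0 (rep t) /\ E t (rep t).
Proof. intros Ht. unfold rep. apply epsilon_spec. exists t. split; auto. apply E_refl; auto. Qed.

Lemma rep_eq t u : E t u -> rep t = rep u.
Proof.
  intros Htu. unfold rep. f_equal. apply functional_extensionality. intros w.
  apply propositional_extensionality. split; intros [Hw H]; split; auto.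
  - eapply E_trans; [apply E_sym|]; eauto.
  - eapply E_trans; eauto.
Qed.

Lemma rep_idem t : wf0 t -> rep (rep t) = rep t.
Proof. intros Ht. symmetry. apply rep_eq. apply rep_spec; auto. Qed.

Lemma rep_E t u : wf0 t -> wf0 u -> rep t = rep u -> E t u.
Proof.
  intros Ht Hu Heq. eapply E_trans; [apply (rep_spec t Ht)|]. rewrite Heq.
  apply E_sym. apply rep_spec; auto.
Qed.

Definition D := {t : term V | wf0 t /\ rep t = t}.

Lemma D_eq (a b : D) : proj1_sig a = proj1_sig b -> a = b.
Proof.
  destruct a as [x Hx], b as [y Hy]; simpl. intros ->. f_equal. apply proof_irrelevance.
Qed.

Lemma wf0_fvar v : wf0 (fvar v). Proof. exact I. Qed.

Definition mkD (t : term V) (Ht : wf0 t) : D :=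
  exist _ (rep t) (conj (proj1 (rep_spec t Ht)) (rep_idem t Ht)).

Definition cls (t : term V) : D :=
  match excluded_middle_informative (wf0 t) with
  | left Ht => mkD t Ht
  | right _ => mkD (fvar 0) (wf0_fvar 0)
  end.

Lemma cls_val t : wf0 t -> proj1_sig (cls t) = rep t.
Proof. intros Ht. unfold cls. destruct (excluded_middle_informative (wf0 t)); [reflexivity|contradiction]. Qed.

Lemma cls_of_val (d : D) : cls (proj1_sig d) = d.
Proof.
  apply D_eq. destruct d as [x [Hx Hr]]. simpl. rewrite cls_val; auto.
Qed.

Lemma val_wf (d : D) : wf0 (proj1_sig d).
Proof. destruct d as [x [Hx Hr]]; auto. Qed.

Lemma val_rep (d : D) : rep (proj1_sig d) = proj1_sig d.
Proof. destruct d as [x [Hr Hx]]; auto. Qed.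

Lemma cls_eq t u : wf0 t -> wf0 u -> (cls t = cls u <-> E t u).
Proof.
  intros Ht Hu. split.
  - intros H. apply rep_E; auto. rewrite <- !cls_val by auto. rewrite H. auto.
  - intros H. apply D_eq. rewrite !cls_val by auto. apply rep_eq; auto.
Qed.

Definition Mod : structure V :=
  Structure V D (fun f ds => cls (tapp f (map (@proj1_sig _ _) ds)))
    (fun p ds => G (fatom p (map (@proj1_sig _ _) ds))).

Definition rho0 : nat -> dom Mod := fun v => cls (fvar v).

Lemma Forall2_rep ts : Forall wf0 ts -> Forall2 E ts (map rep ts).
Proof. induction 1; simpl; constructor; auto. apply (proj2 (rep_spec x H)). Qed.

Lemma Forall2_sym ts us : Forall2 E ts us -> Forall2 E us ts.
Proof. induction 1; constructor; auto. apply E_sym; auto. Qed.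

Lemma TE (t : term V) : wf0 t -> forall be, teval Mod rho0 be t = cls t.
Proof.
  induction t using term_ind'; intros Ht be.
  - reflexivity.
  - unfold wf0 in Ht; simpl in Ht; lia.
  - apply wf_term_app in Ht. destruct Ht as [Hl Hw].
    change (cls (tapp f (map (@proj1_sig _ _) (map (teval Mod rho0 be) ts))) = cls (tapp f ts)).
    rewrite map_map.
    rewrite (map_ext_in _ rep) by (intros x Hx; rewrite Forall_forall in H, Hw; rewrite (H x Hx (Hw x Hx) be); apply cls_val; apply (Hw x Hx)).
    assert (Hwr : Forall wf0 (map rep ts)).
    { rewrite Forall_forall in *. intros x Hx. apply in_map_iff in Hx. destruct Hx as [y [<- Hy]].
      apply (proj1 (rep_spec y (Hw y Hy))). }
    apply cls_eq.
    + apply wf_term_app. rewrite length_map. auto.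
    + apply wf_term_app. auto.
    + apply E_sym.
      refine (cong_list0 (fun l => eqf (tapp f ts) (tapp f l)) (tfvb (tapp f ts)) (length ts) _ _ ts (map rep ts) _ _ _).
      * intros sg l Hsg. pose proof (tpsubst_fresh _ (tapp f ts) sg Hsg) as Ef.
        simpl in Ef |- *. rewrite Ef. reflexivity.
      * intros l Hl' Hlen. apply atom2_wf; auto; apply wf_term_app; split; auto; lia.
      * reflexivity.
      * apply Forall2_rep; auto.
      * apply E_refl. apply wf_term_app; auto.
Qed.


Fixpoint fsz (phi : formula V) : nat :=
  match phi with
  | fatom _ _ | ftop | fbot => 1
  | fand a b | f_or a b => S (fsz a + fsz b)
  | fall _ a | fex a => S (fsz a)
  end.

Lemma fsz_finst phi : forall k u, fsz (finst k u phi) = fsz phi.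
Proof. induction phi; intros; simpl; auto. Qed.

Lemma Forall_map_rep ts : Forall wf0 ts -> Forall wf0 (map rep ts).
Proof. induction 1; simpl; constructor; auto. apply (proj1 (rep_spec x H)). Qed.

Lemma atom_iff p ts : length ts = par V p -> Forall wf0 ts ->
  (G (fatom p (map rep ts)) <-> G (fatom p ts)).
Proof.
  intros Hl Hw. split; intros HG.
  - refine (cong_list0 (fun l => fatom p l) 0 (length ts) _ _ (map rep ts) ts _ _ HG).
    + intros; reflexivity.
    + intros l Hl' Hlen. split; auto. simpl; lia.
    + rewrite length_map; auto.
    + apply Forall2_sym, Forall2_rep; auto.
  - refine (cong_list0 (fun l => fatom p l) 0 (length ts) _ _ ts (map rep ts) _ _ HG).
    + intros; reflexivity.
    + intros l Hl' Hlen. split; auto. simpl; lia.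
    + reflexivity.
    + apply Forall2_rep; auto.
Qed.

Lemma sat_cls_open be psi t : wf0 t ->
  (sat Mod rho0 (scons (cls t) be) psi <-> sat Mod rho0 be (open psi t)).
Proof. intros Ht. rewrite sat_open. rewrite TE; auto. reflexivity. Qed.

Lemma truth n : forall phi, fsz phi < n -> sigma_formula phi ->
  forall be, (sat Mod rho0 be phi <-> G phi).
Proof.
  induction n; intros phi Hn Hs be; [lia|].
  destruct phi; simpl in Hn.
  -
    destruct Hs as [Hl Hw]. change (G (fatom p (map (@proj1_sig _ _) (map (teval Mod rho0 be) l))) <-> G (fatom p l)).
    rewrite map_map.
    rewrite (map_ext_in _ rep) by (intros x Hx; rewrite Forall_forall in Hw; rewrite (TE x (Hw x Hx) be); apply cls_val; apply (Hw x Hx)).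
    apply atom_iff; auto.
  - simpl. split; auto.
  - simpl. split; [contradiction|intros; apply GB; auto].
  - destruct Hs as [H1 H2]. simpl. rewrite (IHn phi1), (IHn phi2) by (auto; lia). split.
    + intros [A B]; apply GA; auto.
    + intros HG. split; (eapply GU; [exact HG|]); [apply and_e1|apply and_e2]; auto.
  - destruct Hs as [H1 H2]. simpl. rewrite (IHn phi1), (IHn phi2) by (auto; lia). split.
    + intros [A|B]; (eapply GU; [eauto|]); [apply or_i1|apply or_i2]; auto.
    + apply GO.
  -
    pose proof Hs as [Hts Hps]. simpl. rewrite (TE t Hts). split.
    + intros Hsat. apply NNPP. intros HG.
      destruct (GF t phi Hs HG) as [c [Hc1 Hc2]]. apply Hc2.
      assert (Hin : predI Mod (sIn V) [cls (fvar c); cls t]).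
      { simpl. rewrite !cls_val by (auto; exact I).
        refine (cong_list0 (fun l => fatom (sIn V) l) 0 2 _ _ [fvar c; t] [rep (fvar c); rep t] _ _ Hc1).
        - intros; reflexivity.
        - intros l Hl' Hlen. split; auto. simpl; lia.
        - reflexivity.
        - apply (Forall2_rep [fvar c; t]). repeat constructor; auto. }
      specialize (Hsat _ Hin). rewrite sat_cls_open in Hsat by exact I.
      rewrite (IHn (open phi (fvar c))) in Hsat; auto.
      unfold open at 1; rewrite fsz_finst; lia. apply wf_open; auto. exact I.
    + intros HG d Hd. rewrite <- (cls_of_val d). rewrite sat_cls_open by apply val_wf.
      rewrite (IHn (open phi (proj1_sig d))); auto.
      2:{ unfold open; rewrite fsz_finst; lia. }
      2:{ apply wf_open; auto. apply val_wf. }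
      assert (Hin : G (inf (proj1_sig d) t)).
      { simpl in Hd. rewrite cls_val in Hd by auto.
        refine (cong_list0 (fun l => fatom (sIn V) l) 0 2 _ _ [proj1_sig d; rep t] [proj1_sig d; t] _ _ Hd).
        - intros; reflexivity.
        - intros l Hl' Hlen. split; auto. simpl; lia.
        - reflexivity.
        - constructor. apply E_refl, val_wf. constructor; [|constructor]. apply E_sym. apply rep_spec; auto. }
      eapply GU; [apply GA; [exact Hin|exact HG]|]. apply der_ax; [split; auto; apply inf_wf; auto; apply val_wf| |apply L13].
      apply wf_open; auto. apply val_wf.
  -
    simpl. split.
    + intros [d Hd]. rewrite <- (cls_of_val d) in Hd. rewrite sat_cls_open in Hd by apply val_wf.
      rewrite (IHn (open phi (proj1_sig d))) in Hd; auto.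
      2:{ unfold open; rewrite fsz_finst; lia. }
      2:{ apply wf_open; auto. apply val_wf. }
      eapply GU; [exact Hd|]. apply der_ax; [apply wf_open; auto; apply val_wf| exact Hs | apply L10].
    + intros HG. destruct (GE phi HG) as [c Hc]. exists (cls (fvar c)).
      rewrite sat_cls_open by exact I. rewrite (IHn (open phi (fvar c))); auto.
      all: try (unfold open at 1; rewrite fsz_finst; lia); try (apply wf_open; auto; exact I).
Qed.

Lemma truth' phi be : sigma_formula phi -> (sat Mod rho0 be phi <-> G phi).
Proof. intros; apply (truth (S (fsz phi))); auto. Qed.

Lemma Mod_adm : admissible Mod.
Proof.
  split; [|split].
  - intros a b. simpl. fold (E (proj1_sig a) (proj1_sig b)). split.
    + intros H. rewrite <- (cls_of_val a), <- (cls_of_val b). apply cls_eq; auto; apply val_wf.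
    + intros ->. apply E_refl, val_wf.
  - intros a b. simpl. split.
    + intros H ->. apply GB. eapply GU; [apply GA; [apply (E_refl (proj1_sig b)); apply val_wf|exact H]|].
      apply der_ax; [| exact I | apply L19]. split; apply atom2_wf; auto; apply val_wf.
    + intros Hab. assert (Ho : G (f_or (eqf (proj1_sig a) (proj1_sig b)) (neqf (proj1_sig a) (proj1_sig b)))).
      { eapply GU; [exact GT|]. apply der_ax; [exact I| |apply L18]. split; apply atom2_wf; auto; apply val_wf. }
      destruct (GO _ _ Ho) as [He|Hn]; auto. exfalso. apply Hab.
      rewrite <- (cls_of_val a), <- (cls_of_val b). apply cls_eq; auto; apply val_wf.
  - intros a b. simpl. split.
    + intros H Hi. apply GB. eapply GU; [apply GA; [exact Hi|exact H]|].
      apply der_ax; [| exact I | apply L17]. split; apply atom2_wf; auto; apply val_wf.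
    + intros Hab. assert (Ho : G (f_or (inf (proj1_sig a) (proj1_sig b)) (ninf (proj1_sig a) (proj1_sig b)))).
      { eapply GU; [exact GT|]. apply der_ax; [exact I| |apply L16]. split; apply atom2_wf; auto; apply val_wf. }
      destruct (GO _ _ Ho) as [He|Hn]; auto. contradiction.
Qed.

Lemma Mod_models (HT : forall c, T c -> sigma_formula (fst c) /\ sigma_formula (snd c)) :
  forall c, T c -> models Mod c.
Proof.
  intros c Hc rho be Hs. destruct (HT c Hc) as [H1 H2].
  set (sg := fun v => proj1_sig (rho v)).
  assert (Hsg : forall be v, teval Mod rho0 be (sg v) = rho v).
  { intros be' v. unfold sg. rewrite TE by apply val_wf. apply cls_of_val. }
  assert (Hw : forall v, wf_term 0 (sg v)) by (intros; apply val_wf).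
  rewrite <- (sat_fpsubst Mod rho0 rho _ sg be Hsg) in Hs.
  rewrite <- (sat_fpsubst Mod rho0 rho _ sg be Hsg).
  rewrite truth' in Hs |- * by (apply wf_fpsubst; auto).
  eapply GU; [exact Hs|]. apply chain_step1; try (apply wf_fpsubst; auto).
  exists hole, (fpsubst sg (fst c)), (fpsubst sg (snd c)). split; auto.
  right. exists c, sg. auto.
Qed.

End Model.

Definition pr (a b : nat) : nat := Cantor.to_nat (a, b).
Lemma pr_inj a b c d : pr a b = pr c d -> a = c /\ b = d.
Proof.
  intros H. assert (E : Cantor.of_nat (pr a b) = Cantor.of_nat (pr c d)) by (rewrite H; auto).
  unfold pr in E. rewrite !Cantor.cancel_of_to in E. inversion E; auto.
Qed.

Section Enc.
Context {V : vocab} (eF : fsym V -> nat) (eP : psym V -> nat)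
  (HF : forall f g, eF f = eF g -> f = g) (HP : forall p q, eP p = eP q -> p = q).

Fixpoint codel {A} (c : A -> nat) (l : list A) : nat :=
  match l with [] => 0 | x :: l' => S (pr (c x) (codel c l')) end.

Fixpoint codet (t : term V) : nat :=
  match t with
  | fvar v => pr 0 v
  | bvar n => pr 1 n
  | tapp f ts => pr 2 (pr (eF f) ((fix cl (l : list (term V)) : nat :=
       match l with [] => 0 | x :: l' => S (pr (codet x) (cl l')) end) ts))
  end.

Lemma codet_app f ts : codet (tapp f ts) = pr 2 (pr (eF f) (codel codet ts)).
Proof. simpl. do 2 f_equal. induction ts; simpl; auto. Qed.

Lemma codel_inj {A} (c : A -> nat) l : Forall (fun x => forall y, c x = c y -> x = y) l ->
  forall l', codel c l = codel c l' -> l = l'.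
Proof.
  induction 1; intros [|y l'] E; simpl in E; try discriminate; auto.
  injection E; intros E'. apply pr_inj in E'. destruct E'. f_equal; auto.
Qed.

Lemma codet_inj t : forall u, codet t = codet u -> t = u.
Proof.
  induction t using term_ind'; intros [w|m|g us] E;
    try rewrite codet_app in E; try rewrite codet_app in E; simpl in E;
    apply pr_inj in E; destruct E as [E1 E2]; try discriminate; subst; auto.
  apply pr_inj in E2. destruct E2 as [E3 E4]. apply HF in E3. subst. f_equal.
  eapply codel_inj; eauto.
Qed.

Fixpoint codef (phi : formula V) : nat :=
  match phi with
  | fatom p ts => pr 0 (pr (eP p) (codel codet ts))
  | ftop => pr 1 0
  | fbot => pr 1 1
  | fand a b => pr 2 (pr (codef a) (codef b))
  | f_or a b => pr 3 (pr (codef a) (codef b))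
  | fall t a => pr 4 (pr (codet t) (codef a))
  | fex a => pr 5 (codef a)
  end.

Lemma codef_inj phi : forall psi, codef phi = codef psi -> phi = psi.
Proof.
  induction phi; intros [q us| | |a b|a b|u a|a] E; simpl in E;
    apply pr_inj in E; destruct E as [E1 E2]; try discriminate; auto;
    try (apply pr_inj in E2; destruct E2 as [E3 E4]); try discriminate.
  - apply HP in E3. subst. f_equal. eapply codel_inj; eauto.
    rewrite Forall_forall. intros; apply codet_inj; auto.
  - f_equal; auto.
  - f_equal; auto.
  - f_equal; auto. apply codet_inj; auto.
  - f_equal; auto.
Qed.

Definition enumf (n : nat) : option (formula V) :=
  match excluded_middle_informative (exists phi, codef phi = n) with
  | left H => Some (proj1_sig (constructive_indefinite_description _ H))
  | right _ => None
  end.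

Lemma enumf_surj phi : exists n, enumf n = Some phi.
Proof.
  exists (codef phi). unfold enumf.
  destruct (excluded_middle_informative _) as [H|H].
  - f_equal. destruct (constructive_indefinite_description _ H) as [psi Hp]. simpl.
    apply codef_inj; auto.
  - exfalso; apply H; eauto.
Qed.
End Enc.

Lemma enum_exists V (HcF : exists e : fsym V -> nat, forall f g, e f = e g -> f = g)
  (HcP : exists e : psym V -> nat, forall p q, e p = e q -> p = q) :
  exists enum : nat -> option (formula V), forall phi, exists n, enum n = Some phi.
Proof.
  destruct HcF as [eF HF], HcP as [eP HP]. exists (enumf eF eP). apply enumf_surj; auto.
Qed.

Lemma main_aux (Sv : vocab)
  (HcF : exists e : fsym Sv -> nat, forall f g, e f = e g -> f = g)
  (HcP : exists e : psym Sv -> nat, forall p q, e p = e q -> p = q)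
  (HaEq : par Sv (sEq Sv) = 2) (HaNeq : par Sv (sNeq Sv) = 2)
  (HaIn : par Sv (sIn Sv) = 2) (HaNin : par Sv (sNin Sv) = 2)
  (T : cond Sv -> Prop)
  (HT : forall c, T c -> sigma_formula (fst c) /\ sigma_formula (snd c))
  (chi chi' : formula Sv)
  (Hchi : sigma_formula chi) (Hchi' : sigma_formula chi') :
  proves T chi chi' \/
  exists M : structure Sv, admissible M /\
    (forall c, T c -> models M c) /\
    exists rho be : nat -> dom M, sat M rho be chi /\ ~ sat M rho be chi'.
Proof.
  destruct (classic (proves T chi chi')) as [Hp|Hnp]; [left; exact Hp|right].
  destruct (enum_exists Sv HcF HcP) as [enum Hsurj].
  assert (H0 : ~ der T chi chi') by (intro H; apply Hnp, proves_chain; exact H).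
  set (G := Gam T enum chi chi').
  assert (GU : forall a b, G a -> der T a b -> G b) by (apply Gam_up).
  assert (GS : forall a, G a -> sigma_formula a) by (apply Gam_sig).
  assert (GA : forall a b, G a -> G b -> G (fand a b)) by (apply Gam_and; auto).
  assert (GT : G ftop).
  { eapply GU; [apply Gam_g0; auto|]. apply der_ax; auto. exact I. apply L1. }
  assert (GB : ~ G fbot).
  { intros H. apply (Gam_Del T HaIn enum chi chi' Hchi Hchi' H0 fbot H).
    exists 0. apply der_ax; [exact I| exact Hchi' |apply L2]. }
  assert (GO : forall a b, G (f_or a b) -> G a \/ G b) by (apply Gam_or; auto).
  assert (GE : forall psi, G (fex psi) -> exists c, G (open psi (fvar c))) by (apply Gam_ex; auto).
  assert (GF : forall s psi, sigma_formula (fall s psi) -> ~ G (fall s psi) ->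
        exists c, G (inf (fvar c) s) /\ ~ G (open psi (fvar c))) by (apply Gam_all; auto).
  exists (Mod T HaEq G GU GS GA GT). split; [|split].
  - apply Mod_adm; auto.
  - apply Mod_models; auto.
  - exists (rho0 T HaEq G GU GS GA GT), (rho0 T HaEq G GU GS GA GT). split.
    + rewrite truth'; auto. apply Gam_g0; auto.
    + rewrite truth'; auto. intros H. apply (Gam_Del T HaIn enum chi chi' Hchi Hchi' H0 chi' H).
      apply Del_d0; auto.
Qed.


Arguments sigma_formula : clear implicits.
Arguments proves : clear implicits.
Arguments admissible : clear implicits.
Arguments models : clear implicits.
Arguments sat : clear implicits.
Arguments dom : clear implicits.

Theorem mainTheorem1 (Sv : vocab)
  (HcF : exists e : fsym Sv -> nat, forall f g, e f = e g -> f = g)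
  (HcP : exists e : psym Sv -> nat, forall p q, e p = e q -> p = q)
  (HaEq : par Sv (sEq Sv) = 2) (HaNeq : par Sv (sNeq Sv) = 2)
  (HaIn : par Sv (sIn Sv) = 2) (HaNin : par Sv (sNin Sv) = 2)
  (Hd1 : sEq Sv <> sNeq Sv) (Hd2 : sEq Sv <> sIn Sv) (Hd3 : sEq Sv <> sNin Sv)
  (Hd4 : sNeq Sv <> sIn Sv) (Hd5 : sNeq Sv <> sNin Sv) (Hd6 : sIn Sv <> sNin Sv)
  (T : cond Sv -> Prop)
  (HT : forall c, T c -> sigma_formula Sv (fst c) /\ sigma_formula Sv (snd c))
  (chi chi' : formula Sv)
  (Hchi : sigma_formula Sv chi) (Hchi' : sigma_formula Sv chi') :
  proves Sv T chi chi' \/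
  exists M : structure Sv, admissible Sv M /\
    (forall c, T c -> models Sv M c) /\
    exists rho be : nat -> dom Sv M, sat Sv M rho be chi /\ ~ sat Sv M rho be chi'.
Proof.
  exact (main_aux Sv HcF HcP HaEq HaNeq HaIn HaNin T HT chi chi' Hchi Hchi').
Qed.
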